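(* For every integer $n\ge 1$, the number of Dumont permutations of the first kind of length $2n$ that avoid the pattern $213$ equals the Catalan number $C_{n-1}=\frac{1}{n}\binom{2n-2}{n-1}$, i.e. $|\mathfrak D^1_{2n}(213)|=C_{n-1}$.
   Context: A Dumont permutation of the first kind of length $2n$ is a permutation $\pi\in\mathfrak S_{2n}$ such that for every $i=1,\dots,2n$: if $\pi(i)$ is even then $i<2n$ and $\pi(i)>\pi(i+1)$; if $\pi(i)$ is odd then $i=2n$ or $\pi(i)<\pi(i+1)$. $\mathfrak D^1_{2n}$ denotes the set of these. A permutation $\sigma$ contains a pattern $\tau\in\mathfrak S_k$ if some subsequence $(\sigma(i_1),\dots,\sigma(i_k))$, $i_1<\dots<i_k$, is order-isomorphic to $\tau$; otherwise $\sigma$ avoids $\tau$. $\mathfrak D^1_{2n}(T)$ denotes the set of permutations in $\mathfrak D^1_{2n}$ avoiding every pattern in $T$. *)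

(* Defs.v *)
From mathcomp Require Import all_boot all_fingroup.
Set Implicit Arguments. Unset Strict Implicit. Unset Printing Implicit Defensive.

(* Permutations of length m are {perm 'I_m}; position i : 'I_m stands for the
   1-based position i+1, and value s i stands for the 1-based value (s i)+1.
   Hence "pi(i) is even" (1-based) is  odd (s i)  (0-based), and
   "i < 2n" (1-based) is  i.+1 < m  (0-based). *)

Definition contains_pattern (m k : nat) (s : {perm 'I_m}) (t : {perm 'I_k}) : bool :=
  [exists f : {ffun 'I_k -> 'I_m},
    [forall a : 'I_k, forall b : 'I_k, (a < b)%N ==> (f a < f b)%N] &&
    [forall a : 'I_k, forall b : 'I_k, (s (f a) < s (f b))%N == (t a < t b)%N]].

Definition avoids_pattern (m k : nat) (s : {perm 'I_m}) (t : {perm 'I_k}) : bool :=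
  ~~ contains_pattern s t.

(* Dumont permutation of the first kind (for m = 2n), positions/values 0-based:
   - if the (1-based) value at i is even then i is not last and s i > s (i+1);
   - if the (1-based) value at i is odd then i is last or s i < s (i+1). *)
Definition dumont1 (m : nat) (s : {perm 'I_m}) : bool :=
  [forall i : 'I_m,
    (odd (s i) ==> [exists j : 'I_m, (j == i.+1 :> nat) && (s j < s i)%N]) &&
    (~~ odd (s i) ==> [forall j : 'I_m, (j == i.+1 :> nat) ==> (s i < s j)%N])].

(* the pattern 213 as a permutation of 'I_3 (0-based: 1 0 2) *)
Definition pat213 : {perm 'I_3} :=
  tperm (Ordinal (isT : (0 < 3)%N)) (Ordinal (isT : (1 < 3)%N)).

Definition catalan (k : nat) : nat := 'C(2 * k, k) %/ k.+1.

(* Main.v *)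
Require Import Defs.
From mathcomp Require Import all_boot all_fingroup zify.
Set Implicit Arguments. Unset Strict Implicit. Unset Printing Implicit Defensive.

Definition dr (x y : nat) : bool := if odd x then y < x else x < y.
Definition dumL (l : seq nat) : bool :=
  if l is x :: t then path dr x t && ~~ odd (last x t) else true.
Fixpoint nox (x : nat) (t : seq nat) : bool :=
  if t is y :: t' then (if y < x then all (fun z => z <= x) t' else nox x t') else true.
Fixpoint avL (l : seq nat) : bool :=
  if l is x :: t then nox x t && avL t else true.

Lemma nox_all x t : all (fun z => z <= x) t -> nox x t.
Proof. elim: t => //= y t IH /andP[_ H]; case: ifP => // _; exact: IH. Qed.

Lemma nox_catl x u w : all (fun z => x < z) u -> nox x (u ++ w) = nox x w.
Proof.
elim: u => //= y u IH /andP[H1 H2]; rewrite ltnNge (ltnW H1) /=; exact: IH.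
Qed.

Lemma nox_drop x w v : nox x (w ++ v) -> nox x v.
Proof.
elim: w => //= y w IH; case: ifP => // _ H; apply: nox_all.
by move: H; rewrite all_cat => /andP[].
Qed.

Lemma nox_rem x u w v : nox x (u ++ w ++ v) -> nox x (u ++ v).
Proof.
elim: u => /= [|y u IH]; first exact: nox_drop.
case: ifP => // _; rewrite !all_cat => /and3P[-> _ ->] //.
Qed.

Lemma avL_suffix w t : avL (w ++ t) -> avL t.
Proof. by elim: w => //= y w IH /andP[_ /IH]. Qed.

Lemma avL_nox w x t : avL (w ++ x :: t) -> nox x t.
Proof. by move/avL_suffix => /= /andP[]. Qed.

Lemma avL_rem u w v : avL (u ++ w ++ v) -> avL (u ++ v).
Proof.
elim: u => /= [|y u IH]; first exact: avL_suffix.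
by move=> /andP[/nox_rem -> /IH ->].
Qed.

Lemma avL_ins u v a b : sorted ltn u -> all (fun z => z < a) (u ++ v) -> a < b ->
  avL (u ++ v) -> avL (u ++ a :: b :: v).
Proof.
elim: u => /= [|x u IH] Hs Ha Hab.
  move=> ->; rewrite ltnNge (ltnW Hab) /= !andbT.
  apply/andP; split; apply: nox_all; apply/allP => z /(allP Ha) Hz; lia.
case/andP: Ha => Hxa Ha /andP[Hn Hav].
have Hxu : all (fun z => x < z) u by apply: (order_path_min ltn_trans Hs).
rewrite IH //; last exact: path_sorted Hs.
rewrite andbT nox_catl // /= ltnNge (ltnW Hxa) /= ltnNge.
have -> : x <= b by lia.
by rewrite /= -(nox_catl v Hxu).
Qed.

Lemma avL_sorted u a w : avL (u ++ a :: w) -> all (fun z => z < a) u ->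
  sorted leq (rcons u a).
Proof.
elim: u => //= x u IH /andP[Hn Hav] /andP[Hxa Ha].
have := IH Hav Ha; case: u {IH Hav Ha} Hn => /= [|y u] Hn Hs.
  by rewrite ltnW.
rewrite Hs andbT; move: Hn; case: ifP => [Hyx|]; last by move/negbT; rewrite -leqNgt.
rewrite all_cat /= => /and3P[_ H _]; lia.
Qed.

Lemma pathLD x s : path leq x s -> path dr x s ->
  path ltn x s && all (fun z => ~~ odd z) (belast x s).
Proof.
elim: s x => //= y s IH x /andP[Hxy Hp] /andP[Hd Hp'].
have Hx : ~~ odd x by move: Hd; rewrite /dr; case: ifP => // _; lia.
move: Hd; rewrite /dr (negbTE Hx) => ->.
by case/andP: (IH _ Hp Hp') => -> ->.
Qed.

Lemma path_dr_ltn x s : all (fun z => ~~ odd z) (x :: s) -> path dr x s -> path ltn x s.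
Proof.
elim: s x => //= y s IH x /and3P[Hx Hy Hs] /andP[Hd Hp].
move: Hd; rewrite /dr (negbTE Hx) => ->; apply: IH => //; by rewrite Hy.
Qed.

Lemma dumL_adj w x y t : dumL (w ++ x :: y :: t) -> dr x y.
Proof.
case: w => /= [|z w]; first by case/andP => /andP[].
by rewrite cat_path => /andP[/andP[_ /= /and3P[]]].
Qed.

Lemma dumL_rem0 a b v : dumL (a :: b :: v) -> v != [::] -> dumL v.
Proof. by case: v => //= y v /andP[/and3P[_ _ ->] ->]. Qed.

Lemma dumL_rem h s a b y v : dumL ((h :: s) ++ a :: b :: y :: v) -> dr (last h s) y ->
  dumL ((h :: s) ++ y :: v).
Proof.
rewrite /= !cat_path !last_cat /= => /andP[/andP[-> /and4P[_ _ _ ->]] ->] ->.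
by [].
Qed.

Lemma dumL_ins0 a y v : dumL (y :: v) -> ~~ odd a -> y < a.+1 -> dumL (a :: a.+1 :: y :: v).
Proof.
rewrite /= /dr => /andP[-> ->] Ha Hy; rewrite (negbTE Ha) /= ltnSn /=.
by rewrite Ha /= Hy.
Qed.

Lemma dumL_ins h s a y v : dumL ((h :: s) ++ y :: v) -> dr (last h s) a -> ~~ odd a ->
  y < a.+1 -> dumL ((h :: s) ++ a :: a.+1 :: y :: v).
Proof.
rewrite /= !cat_path !last_cat /= => /andP[/andP[-> /andP[_ ->]] ->] -> Ha Hy.
by rewrite /dr (negbTE Ha) ltnSn /= Ha Hy.
Qed.


Definition good m (l : seq nat) := [&& perm_eq l (iota 0 (2*m)), dumL l & avL l].
Definition r (l : seq nat) := (find odd l).+1.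
Definition ins a (l : seq nat) p := take p l ++ a :: a.+1 :: drop p l.

Lemma iota_split m : iota 0 (2 * m.+1) = iota 0 (2 * m) ++ [:: 2 * m; (2 * m).+1].
Proof. by rewrite (_ : 2 * m.+1 = 2 * m + 2) ?iotaD //; lia. Qed.

Lemma perm_mem_lt l n x : perm_eq l (iota 0 n) -> x \in l -> x < n.
Proof. by move=> Hp; rewrite (perm_mem Hp) mem_iota. Qed.

Lemma last_le h s : path leq h s -> all (fun z => z <= last h s) (h :: s).
Proof.
elim: s h => /= [|y s IH] h; first by rewrite leqnn.
move=> /andP[Hhy Hp]; have := IH _ Hp => /= /andP[Hy ->].
by rewrite (leq_trans Hhy Hy) Hy.
Qed.

Lemma nohas_take l p : p <= find odd l -> ~~ has odd (take p l).
Proof.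
move=> Hp; apply/negP => Hh.
have := Hp; rewrite -{1}(cat_take_drop p l) find_cat Hh.
have Hs : size (take p l) <= p by rewrite size_take; case: ifP => // /negbT; rewrite -leqNgt.
move: Hh; rewrite has_find; lia.
Qed.

Lemma odd2m m : odd (2 * m) = false.
Proof. by rewrite oddM. Qed.

Lemma perm_ins (u v : seq nat) a b : perm_eq (u ++ a :: b :: v) ((u ++ v) ++ [:: a; b]).
Proof. by rewrite -catA perm_cat2l -[a :: b :: v]/([:: a; b] ++ v) perm_catC. Qed.

Lemma r_ins a l p : ~~ odd a -> p < r l -> r (ins a l p) = p.+2.
Proof.
rewrite /r /ins ltnS => Ha Hp.
have Hs : p <= size l by apply: leq_trans Hp (find_size _ _).
rewrite find_cat (negbTE (nohas_take Hp)) size_take /= (negbTE Ha) /=.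
case: ifP => H; [lia | move/negbT: H; rewrite -leqNgt => H; lia].
Qed.

Lemma ins_good m (l : seq nat) p : good m.+1 l -> p < r l -> good m.+2 (ins (2 * m.+1) l p).
Proof.
set a := 2 * m.+1.
case/and3P => Hperm Hdum Hav Hp; rewrite /r ltnS in Hp.
have Ha : ~~ odd a by rewrite /a odd2m.
have Hlt : all (fun z => z < a) l by apply/allP => z; apply: perm_mem_lt.
have Hodd : has odd l by apply/hasP; exists 1 => //; rewrite (perm_mem Hperm) mem_iota /a; lia.
have Hps : p < size l by apply: leq_ltn_trans Hp _; rewrite -has_find.
have Hu := nohas_take Hp.
rewrite /good /ins; apply/and3P; split.
- rewrite iota_split -/a.
  apply: perm_trans (perm_ins _ _ _ _) _; rewrite perm_cat2r cat_take_drop //.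
- rewrite (drop_nth 0 Hps).
  have Hy : nth 0 l p < a.+1 by apply: leq_trans (_ : _ < a) _ => //; apply: (allP Hlt); exact: mem_nth.
  case: p Hp Hps Hu Hy => [|p] Hp Hps Hu Hy.
    rewrite take0 /=; apply: dumL_ins0 => //.
    by rewrite -(drop_nth 0 Hps) drop0.
  case: l Hperm Hdum Hav Hlt Hodd Hp Hps Hu Hy => // h t Hperm Hdum Hav Hlt Hodd Hp Hps Hu Hy.
  rewrite /= -/(cat (h :: take p t) _); apply: dumL_ins => //.
    rewrite /= -(drop_nth 0 Hps) /= -/(cat (h :: take p t) _).
    by rewrite cat_take_drop; exact: Hdum.
  have Hx : last h (take p t) \in h :: t.
    by rewrite -[h :: t](cat_take_drop p.+1) mem_cat /= mem_last.
  have Hxe : ~~ odd (last h (take p t)).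
    by move: Hu; rewrite /= => /norP[Hh /hasPn]; move: (mem_last h (take p t)); rewrite inE => /orP[/eqP ->|/[swap] H /H].
  by rewrite /dr (negbTE Hxe); apply: (allP Hlt).
- apply: avL_ins => //; last by rewrite cat_take_drop.
    case: p Hp Hps Hu => [|p] Hp Hps Hu; first by rewrite take0.
    case: l Hperm Hdum Hav Hlt Hodd Hp Hps Hu => // h t Hperm Hdum Hav Hlt Hodd Hp Hps Hu.
    rewrite /= in Hu *; apply: path_dr_ltn; first by rewrite all_predC /= Hu.
    move: Hdum; rewrite /= -{1}(cat_take_drop p t) cat_path => /andP[/andP[]] //.
  by rewrite cat_take_drop.
Qed.

Lemma dumL_last w x : dumL (w ++ [:: x]) -> ~~ odd x.
Proof. by case: w => /= [|y w] //; rewrite last_cat => /andP[]. Qed.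

Lemma good_split m (l : seq nat) : good m.+2 l -> exists u v,
  l = u ++ 2 * m.+1 :: (2 * m.+1).+1 :: v /\ good m.+1 (u ++ v) /\ size u < r (u ++ v).
Proof.
set a := 2 * m.+1.
case/and3P => Hperm Hdum Hav.
have Ha : ~~ odd a by rewrite /a odd2m.
have Hmem x : (x \in l) = (x < a.+2).
  by rewrite (perm_mem Hperm) mem_iota /a; congr (_ < _); lia.
have Huniq : uniq l by rewrite (perm_uniq Hperm) iota_uniq.
have Hal : a \in l by rewrite Hmem.
move: Hperm Hdum Hav Hmem Huniq; case: (splitPr Hal) => u w Hperm Hdum Hav Hmem Huniq.
case: w => [|y w] in Hperm Hdum Hav Hmem Huniq *.
  exfalso.
  have : 1 \in u ++ [:: a] by rewrite Hmem /a; lia.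
  rewrite mem_cat inE (_ : (1 == a) = false) ?orbF; last by apply/eqP; rewrite /a; lia.
  move=> H1u; move: Hdum Hav; case: (splitPr H1u) => u1 u2 Hdum Hav.
  rewrite -catA /= in Hdum Hav.
  case: u2 => [|y u2] /= in Hdum Hav.
    by move: (dumL_adj Hdum); rewrite /dr /=; lia.
  move: (dumL_adj Hdum); rewrite /dr /= ltnS leqn0 => /eqP Hy; subst y.
  move: (avL_nox Hav) => /=; rewrite all_cat /= => /andP[_ /andP[]]; rewrite /a; lia.
have Hy : y = a.+1.
  have := dumL_adj Hdum; rewrite /dr (negbTE Ha) => H1.
  have : y < a.+2 by rewrite -Hmem mem_cat !inE eqxx !orbT.
  lia.
subst y.
case: w => [|y v] in Hperm Hdum Hav Hmem Huniq *.
  by move: Hdum; rewrite -[u ++ _](cat_rcons) -cats1 => /dumL_last; rewrite /= Ha.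
exists u, (y :: v); split => //.
have Hperm' : perm_eq (u ++ y :: v) (iota 0 (2 * m.+1)).
  rewrite -(perm_cat2r [:: a; a.+1]) /a -iota_split -/a.
  apply: (perm_trans (y := u ++ [:: a, a.+1, y & v])) Hperm; rewrite perm_sym; exact: perm_ins.
have Hlt : all (fun z => z < a) (u ++ y :: v) by apply/allP => z; apply: perm_mem_lt.
have Hsort : sorted leq (rcons u a).
  apply: avL_sorted Hav _; by move: Hlt; rewrite all_cat => /andP[].
have Hev : all (fun z => ~~ odd z) u.
  case: u Hdum Hsort {Hperm Hav Hmem Huniq Hperm' Hlt} => // h s Hdum Hsort.
  have Hpd : path dr h (rcons s a).
    by move: Hdum; rewrite /= cat_path rcons_path => /andP[/andP[-> /= /andP[-> _]]].
  by case/andP: (pathLD Hsort Hpd); rewrite belast_rcons.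
have Hdum' : dumL (u ++ y :: v).
  case: u Hdum Hsort Hev Hlt Hav Huniq Hperm' {Hperm Hmem} => [|h s] Hdum Hsort Hev Hlt Hav Huniq Hperm'.
    by apply: dumL_rem0 Hdum _.
  apply: dumL_rem Hdum _.
  set x := last h s.
  have Hxu : x \in h :: s by apply: mem_last.
  have Hxe : ~~ odd x by apply: (allP Hev).
  rewrite /dr (negbTE Hxe).
  have Hxa : x < a by apply: (allP Hlt); rewrite mem_cat Hxu.
  have Hx1 : x.+1 \in (h :: s) ++ y :: v.
    rewrite (perm_mem Hperm') mem_iota /=.
    have : x.+1 != a by apply/negP => /eqP Hxa1; move: Ha; rewrite -Hxa1 /= Hxe.
    rewrite -/a; lia.
  have Hx1u : x.+1 \notin h :: s.
    have Hp : path leq h s by move: Hsort; rewrite /= rcons_path => /andP[].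
    apply/negP => /(allP (last_le Hp)); rewrite -/x; lia.
  move: Hx1; rewrite mem_cat (negbTE Hx1u) /= inE => /orP[/eqP ->|Hx1v]; first by [].
  rewrite ltnNge leq_eqVlt; apply/negP => /orP[/eqP Hyx|Hyx].
    move: Huniq; rewrite Hyx cat_uniq => /and3P[_ /hasPn H _].
    by move: (H x); rewrite !inE eqxx /= !orbT => /(_ isT); move: Hxu; rewrite inE => ->.
  move: Hav; rewrite (lastI h s) -/x cat_rcons => /avL_nox /=.
  have -> : (a < x) = false by apply/negbTE/negP => ?; lia.
  have -> : (a.+1 < x) = false by apply/negbTE/negP => ?; lia.
  rewrite Hyx.
  by move/allP => /(_ _ Hx1v); lia.
rewrite /good Hperm' Hdum' (avL_rem (w := [:: a; a.+1]) Hav) /=.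
split => //.
rewrite /r find_cat.
have -> : has odd u = false by apply/negbTE; rewrite -all_predC.
lia.
Qed.


Fixpoint dgenlist k : seq (seq nat) :=
  if k is k'.+1 then [seq ins (2 * k) l p | l <- dgenlist k', p <- iota 0 (r l)]
  else [:: [:: 1; 0]].

Lemma good1 l : good 1 l = (l == [:: 1; 0]).
Proof.
apply/idP/eqP => [|->] //.
case/and3P; rewrite -mem_permutations /= !inE => /orP[] /eqP -> //.
Qed.

Lemma dgenlist_mem k l : (l \in dgenlist k) = good k.+1 l.
Proof.
elim: k l => [|k IH] l; first by rewrite /= inE good1.
apply/idP/idP.
  case/allpairsPdep => l0 [p [Hl0 Hp ->]].
  rewrite IH in Hl0; rewrite mem_iota /= in Hp.
  exact: ins_good.
case/good_split => u [v [-> [Hg Hr]]].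
apply/allpairsPdep; exists (u ++ v), (size u); split.
- by rewrite IH.
- by rewrite mem_iota.
- by rewrite /ins take_size_cat // drop_size_cat.
Qed.

Lemma r_le k l : l \in dgenlist k -> r l <= k.+1.
Proof.
elim: k l => [|k IH] l; first by rewrite inE => /eqP ->.
case/allpairsPdep => l0 [p [Hl0 Hp ->]].
rewrite mem_iota /= in Hp.
rewrite r_ins ?odd2m //.
have := IH _ Hl0; lia.
Qed.

Lemma drop2 (s1 s2 : seq nat) x y n : size s1 = n -> drop n.+2 (s1 ++ x :: y :: s2) = s2.
Proof. by move=> <-; elim: s1 => [|z s1 IH] //=; rewrite drop0. Qed.

Lemma dgenlist_uniq k : uniq (dgenlist k).
Proof.
elim: k => [|k IH] //.
change (uniq [seq ins (2 * k.+1) l p | l <- dgenlist k, p <- iota 0 (r l)]).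
apply: (allpairs_uniq_dep (T := fun _ => nat)) => //; first by move=> l _; exact: iota_uniq.
move=> [l1 p1] [l2 p2] /allpairsPdep [l1' [p1' [H1 H1' [E1 E2]]]].
move=> /allpairsPdep [l2' [p2' [H2 H2' [E3 E4]]]] /=.
subst l1' p1' l2' p2'.
rewrite !mem_iota /= in H1' H2'.
have Hn1 : 2 * k.+1 \notin l1.
  by rewrite dgenlist_mem in H1; case/and3P: H1 => Hp _ _; rewrite (perm_mem Hp) mem_iota; lia.
have Hn2 : 2 * k.+1 \notin l2.
  by rewrite dgenlist_mem in H2; case/and3P: H2 => Hp _ _; rewrite (perm_mem Hp) mem_iota; lia.
have Hs1 : p1 <= size l1 by apply: leq_trans (find_size odd l1); exact: H1'.
have Hs2 : p2 <= size l2 by apply: leq_trans (find_size odd l2); exact: H2'.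
rewrite /ins => E.
have Ep : p1 = p2.
  have := congr1 (index (2 * k.+1)) E.
  rewrite !index_cat.
  have -> : (2 * k.+1 \in take p1 l1) = false by apply/negbTE; apply: contra Hn1; apply: mem_take.
  have -> : (2 * k.+1 \in take p2 l2) = false by apply/negbTE; apply: contra Hn2; apply: mem_take.
  by rewrite !size_takel //= eqxx !addn0.
subst p2.
have Et : take p1 l1 = take p1 l2.
  have := congr1 (take p1) E; rewrite !take_size_cat ?size_takel //.
have Ed : drop p1 l1 = drop p1 l2.
  by have := congr1 (drop p1.+2) E; rewrite !drop2 ?size_takel.
by rewrite -(cat_take_drop p1 l1) Et Ed cat_take_drop.
Qed.


Definition u k q := count (fun l => q < r l) (dgenlist k).

Lemma count_allpairs (S R : Type) (P : pred R) (f : S -> nat -> R) (s : seq S) (t : S -> seq nat) :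
  count P [seq f x y | x <- s, y <- t x] = sumn [seq count (fun y => P (f x y)) (t x) | x <- s].
Proof.
elim: s => // x s IH; by rewrite allpairs_cons count_cat count_map IH.
Qed.

Lemma count_iota_ge n m : count (fun p => m <= p) (iota 0 n) = n - m.
Proof.
elim: n => [|n IH] //.
rewrite -addn1 iotaD count_cat IH /= add0n addn0; case: leqP => H; lia.
Qed.

Lemma u_succ k q : u k.+1 q = sumn [seq r l - q.-1 | l <- dgenlist k].
Proof.
rewrite /u; change (dgenlist k.+1) with [seq ins (2 * k.+1) l p | l <- dgenlist k, p <- iota 0 (r l)].
rewrite count_allpairs; congr sumn; apply/eq_in_map => l Hl.
rewrite -count_iota_ge; apply: eq_in_count => p; rewrite mem_iota /= => Hp.
rewrite r_ins ?odd2m //; case: q => //= q; lia.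
Qed.

Lemma sumn_split (s : seq (seq nat)) q :
  sumn [seq r l - q | l <- s] = count (fun l => q < r l) s + sumn [seq r l - q.+1 | l <- s].
Proof.
elim: s => //= l s ->; case: ltnP => H; lia.
Qed.

Lemma u_rec k q : u k.+1 q.+1 = u k q + u k.+1 q.+2.
Proof. by rewrite !u_succ /= sumn_split. Qed.

Lemma u_0 k : u k.+1 0 = u k.+1 1.
Proof. by rewrite !u_succ. Qed.

Lemma u_big k q : k < q -> u k q = 0.
Proof.
move=> Hq; rewrite /u; apply/eqP; rewrite -leqn0 leqNgt -has_count; apply/hasPn => l Hl.
have := r_le Hl; lia.
Qed.

Lemma u_base q : u 0 q = (q == 0).
Proof. by case: q. Qed.

Lemma phi k q : q <= k -> u k q + 'C(2 * k - q, k.+1) = 'C(2 * k - q, k).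
Proof.
elim: k q => [|k IH] q Hq.
  by move: Hq; rewrite leqn0 => /eqP ->.
have Hpos : forall q, q <= k -> u k.+1 q.+1 + 'C(2 * k.+1 - q.+1, k.+2) = 'C(2 * k.+1 - q.+1, k.+1).
  move=> q0 Hq0.
  have Ed : forall d, d <= k -> u k.+1 (k - d).+1 + 'C(2 * k.+1 - (k - d).+1, k.+2) = 'C(2 * k.+1 - (k - d).+1, k.+1).
    elim=> [|d IHd] Hd.
      rewrite subn0 u_rec (@u_big k.+1 k.+2) // (_ : 2 * k.+1 - k.+1 = k.+1); last by lia.
      have := IH k (leqnn k); rewrite (_ : 2 * k - k = k); last by lia.
      rewrite (@bin_small k k.+1) // (@bin_small k.+1 k.+2) // !binn; lia.
    rewrite u_rec.
    have H1 := IH (k - d.+1) (leq_subr _ _).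
    have H2 := IHd (ltnW Hd).
    rewrite (_ : (k - d.+1).+2 = (k - d).+1) in H2 *; last by lia.
    rewrite (_ : 2 * k.+1 - (k - d).+1 = 2 * k - (k - d.+1)) in H2; last by lia.
    rewrite (_ : 2 * k.+1 - (k - d.+1).+1 = (2 * k - (k - d.+1)).+1); last by lia.
    rewrite !binS; lia.
  have := Ed (k - q0) (leq_subr _ _); rewrite (_ : k - (k - q0) = q0) //; lia.
case: q Hq => [|q] Hq; last exact: Hpos.
rewrite u_0; have := Hpos 0 (leq0n _).
rewrite !subn0 subn1 (_ : 2 * k.+1 = (2 * k).+2); last by lia.
rewrite /= !binS.
have -> : 'C((2 * k).+1, k) = 'C((2 * k).+1, k.+1).
  by rewrite -(bin_sub (_ : k <= (2 * k).+1)); [congr binomial; lia | lia].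
rewrite binS; lia.
Qed.

Lemma size_dgenlist k : size (dgenlist k) = catalan k.
Proof.
have -> : size (dgenlist k) = u k 0.
  by rewrite /u -(count_predT (dgenlist k)); apply: eq_count.
have H := phi (leq0n k); rewrite subn0 in H.
have H2 := mul_bin_left (2 * k) k.
rewrite (_ : 2 * k - k = k) in H2; last by lia.
rewrite /catalan -H.
have -> : u k 0 + 'C(2 * k, k.+1) = u k 0 * k.+1 by nia.
by rewrite mulnK.
Qed.


Definition dumIdx (l : seq nat) := forall i, i < size l ->
  (odd (nth 0 l i) -> i.+1 < size l /\ nth 0 l i.+1 < nth 0 l i) /\
  (~~ odd (nth 0 l i) -> i.+1 < size l -> nth 0 l i < nth 0 l i.+1).

Lemma last_nth0 x t : last x t = nth 0 (x :: t) (size t).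
Proof. by rewrite -[size t]/((size (x :: t)).-1) nth_last. Qed.

Lemma dumL_idx l : dumL l <-> dumIdx l.
Proof.
rewrite /dumIdx; case: l => [|x t] /=; first by split => // _ i.
split.
  case/andP => /(pathP 0) Hp Hl i Hi.
  have [Hit|Hit] := ltnP i (size t).
    have := Hp i Hit; rewrite /dr /=.
    by case: (odd _) => /= H; split => // _; split.
  have Hie : i = size t by lia.
  subst i; move: Hl; rewrite last_nth0 => Hl.
  by rewrite (negbTE Hl); split => //; lia.
move=> H; apply/andP; split.
  apply/(pathP 0) => i Hi.
  have [H1 H2] := H i (ltnW Hi); rewrite /dr.
  case: ifP => Ho; first by case: (H1 Ho).
  by apply: H2 => //; rewrite Ho.
have [H1 _] := H (size t) (ltnSn _).
apply/negP => Ho; move: H1; rewrite -last_nth0 => /(_ Ho) [].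
lia.
Qed.

Lemma nox_idx x t : nox x t <-> forall j k, j < k -> k < size t ->
  ~~ ((nth 0 t j < x) && (x < nth 0 t k)).
Proof.
elim: t => [|y t IH] /=; first by split => // _ j k; lia.
split.
  case: ifP => Hyx.
    move/allP => Ha [|j] [|k] //= Hjk Hk; apply/negP => /andP[_ H];
    have := Ha (nth 0 t k) (mem_nth 0 (_ : k < size t)); lia.
  move/IH => H [|j] [|k] //= Hjk Hk; first by rewrite Hyx.
  exact: H.
move=> H; case: ifP => Hyx.
  apply/allP => z /(nthP 0) [k Hk <-].
  have := H 0 k.+1 isT Hk; rewrite /= Hyx /=; lia.
apply/IH => j k Hjk Hk; exact: (H j.+1 k.+1).
Qed.

Lemma avL_idx l : avL l <-> forall i j k, i < j -> j < k -> k < size l ->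
  ~~ ((nth 0 l j < nth 0 l i) && (nth 0 l i < nth 0 l k)).
Proof.
elim: l => [|x t IH] /=; first by split => // _ i j k; lia.
split.
  case/andP => /nox_idx Hn /IH Ha [|i] [|j] [|k] //= Hij Hjk Hk.
    exact: Hn.
  exact: Ha.
move=> H; apply/andP; split.
  apply/nox_idx => j k Hjk Hk; exact: (H 0 j.+1 k.+1).
apply/IH => i j k Hij Hjk Hk; exact: (H i.+1 j.+1 k.+1).
Qed.


Definition lst m (s : {perm 'I_m}) : seq nat := [seq val (s i) | i <- enum 'I_m].

Lemma size_lst m (s : {perm 'I_m}) : size (lst s) = m.
Proof. by rewrite size_map size_enum_ord. Qed.

Lemma nth_lst m (s : {perm 'I_m}) (i : 'I_m) : nth 0 (lst s) i = s i.
Proof. by rewrite (nth_map i) ?size_enum_ord // nth_ord_enum. Qed.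

Lemma nth_lst' m (s : {perm 'I_m}) i (Hi : i < m) : nth 0 (lst s) i = s (Ordinal Hi).
Proof. by rewrite -nth_lst. Qed.

Lemma lst_inj m : injective (@lst m).
Proof.
move=> s1 s2 E; apply/permP => i; apply/val_inj.
by have := congr1 (fun l => nth 0 l i) E; rewrite /= !nth_lst.
Qed.

Lemma lst_perm m (s : {perm 'I_m}) : perm_eq (lst s) (iota 0 m).
Proof.
apply: uniq_perm; first by rewrite map_inj_uniq ?enum_uniq // => i j /val_inj /perm_inj.
  exact: iota_uniq.
move=> x; rewrite mem_iota add0n /=; apply/mapP/idP.
  by case=> i _ ->; exact: ltn_ord.
move=> Hx.
exists ((s^-1)%g (Ordinal Hx)); first by rewrite mem_enum.
by rewrite permKV.
Qed.

Definition mkf m (l : seq nat) (i : 'I_m) : 'I_m := insubd i (nth 0 l i).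

Lemma lst_surj m (l : seq nat) : perm_eq l (iota 0 m) -> exists s : {perm 'I_m}, lst s = l.
Proof.
move=> Hp.
have Hs : size l = m by rewrite (perm_size Hp) size_iota.
have Hu : uniq l by rewrite (perm_uniq Hp) iota_uniq.
have Hv : forall i : 'I_m, val (mkf l i) = nth 0 l i.
  move=> i; rewrite /mkf val_insubd.
  have : nth 0 l i \in l by apply: mem_nth; rewrite Hs.
  by rewrite (perm_mem Hp) mem_iota add0n /= => ->.
have Hinj : injective (@mkf m l).
  move=> i j E; have := congr1 val E; rewrite !Hv => /eqP; rewrite nth_uniq ?Hs // => /eqP.
  exact: val_inj.
exists (perm Hinj); apply: (@eq_from_nth _ 0); first by rewrite size_lst Hs.
move=> i; rewrite size_lst => Hi.
by rewrite nth_lst' permE Hv.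
Qed.

Lemma dum_equiv m (s : {perm 'I_m}) : dumont1 s = dumL (lst s).
Proof.
apply/idP/idP.
  move=> /forallP H; apply/dumL_idx => i; rewrite size_lst => Hi.
  have /andP[H1 H2] := H (Ordinal Hi).
  rewrite nth_lst'; split.
    move=> Ho; move/implyP: H1 => /(_ Ho) /existsP [j /andP[/eqP Hj Hlt]].
    have Hi1 : i.+1 < m by rewrite -Hj ltn_ord.
    by split => //; rewrite nth_lst'; move: Hlt; congr (_ < _); congr (val (s _)); apply/val_inj.
  move=> Ho Hi1; move/implyP: H2 => /(_ Ho) /forallP /(_ (Ordinal Hi1)) /implyP /(_ (eqxx _)).
  by rewrite nth_lst'.
move/dumL_idx; rewrite /dumIdx size_lst => H; apply/forallP => i.
have [H1 H2] := H i (ltn_ord i); rewrite !nth_lst in H1 H2.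
apply/andP; split; apply/implyP => Ho.
  have [Hi1 Hlt] := H1 Ho; apply/existsP; exists (Ordinal Hi1); rewrite eqxx /=.
  by rewrite -nth_lst.
apply/forallP => j; apply/implyP => /eqP Hj.
have Hi1 : i.+1 < m by rewrite -Hj ltn_ord.
have := H2 Ho Hi1; rewrite (nth_lst' s Hi1).
by congr (_ < _); congr (val (s _)); apply/val_inj.
Qed.

Lemma pat_val (a : 'I_3) : nat_of_ord (pat213 a) = nth 0 [:: 1; 0; 2] a.
Proof. by case: a => [[|[|[|a]]] Ha] //; rewrite /pat213 permE. Qed.

Lemma contains_equiv m (s : {perm 'I_m}) : contains_pattern s pat213 <->
  exists i j k : 'I_m, [/\ i < j, j < k & (s j < s i) && (s i < s k)].
Proof.
split.
  case/existsP => f /andP[/forallP Hinc /forallP Hiso].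
  have o0 : 0 < 3 by []. have o1 : 1 < 3 by []. have o2 : 2 < 3 by [].
  exists (f (Ordinal o0)), (f (Ordinal o1)), (f (Ordinal o2)); split.
  - by move/forallP: (Hinc (Ordinal o0)) => /(_ (Ordinal o1)) /implyP; apply.
  - by move/forallP: (Hinc (Ordinal o1)) => /(_ (Ordinal o2)) /implyP; apply.
  - move/forallP: (Hiso (Ordinal o1)) => /(_ (Ordinal o0)); rewrite !pat_val /= => /eqP ->.
    by move/forallP: (Hiso (Ordinal o0)) => /(_ (Ordinal o2)); rewrite !pat_val /= => /eqP ->.
case=> i [j [k [Hij Hjk /andP[H1 H2]]]].
apply/existsP; exists [ffun a : 'I_3 => nth i [:: i; j; k] a].
apply/andP; split; apply/forallP => a; apply/forallP => b; rewrite !ffunE.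
  by apply/implyP; case: a => [[|[|[|a]]] Ha] //; case: b => [[|[|[|b]]] Hb] //= _; lia.
rewrite !pat_val.
case: a => [[|[|[|a]]] Ha] //; case: b => [[|[|[|b]]] Hb] //=; apply/eqP; lia.
Qed.

Lemma av_equiv m (s : {perm 'I_m}) : avoids_pattern s pat213 = avL (lst s).
Proof.
apply/idP/idP.
  move=> Hav; apply/avL_idx => i j k Hij Hjk; rewrite size_lst => Hk.
  have Hj : j < m by lia.
  have Hi : i < m by lia.
  rewrite !nth_lst'; apply/negP => H.
  move/negP: Hav; apply; apply/contains_equiv.
  by exists (Ordinal Hi), (Ordinal Hj), (Ordinal Hk).
move/avL_idx => H; apply/negP => /contains_equiv [i [j [k [Hij Hjk Hp]]]].
have := H i j k Hij Hjk; rewrite size_lst !nth_lst => /(_ (ltn_ord k)).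
by rewrite Hp.
Qed.


Theorem theorem2p1 (n : nat) : (1 <= n)%N ->
  #|[set s : {perm 'I_(2 * n)} | dumont1 s && avoids_pattern s pat213]|
  = catalan n.-1.
Proof.
case: n => [|k] // _; rewrite -size_dgenlist /=.
set A := [set s | _].
rewrite cardE -(size_map (@lst _)).
apply: perm_size; apply: uniq_perm.
- by rewrite map_inj_uniq ?enum_uniq //; exact: lst_inj.
- exact: dgenlist_uniq.
move=> l; rewrite dgenlist_mem; apply/mapP/idP.
  case=> s; rewrite mem_enum inE => /andP[H1 H2] ->.
  by rewrite /good lst_perm -dum_equiv -av_equiv H1 H2.
case/and3P => Hp Hd Ha; have [s Hs] := lst_surj Hp.
exists s => //; rewrite mem_enum inE dum_equiv av_equiv Hs Hd Ha //.
Qed.
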